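(* Let $X$ be a smooth projective curve of genus 2, let $S$ be the moduli variety of S-equivalence classes of semi-stable rank-2 vector bundles of degree 0 on $X$ with trivial determinant, and let $K\subset S$ be the set of non-stable classes, i.e. the classes of $j\oplus j^{-1}$ with $j$ a line bundle of degree 0 on $X$ (so $K$ is the Kummer surface of the Jacobian of $X$). For $a=j\oplus j^{-1}$, $b=l\oplus l^{-1}$ in $K$ define $$a\star_s b=\big(j\otimes l\oplus j^{-1}\otimes l^{-1},\ j\otimes l^{-1}\oplus j^{-1}\otimes l\big).$$ Then $\star_s\colon K\times K\to(K)^2$ defines a two-valued group structure on $K$.
   Context: A holomorphic bundle $W$ is semi-stable if $\deg V/\mathrm{rank}\,V\le \deg W/\mathrm{rank}\,W$ for every proper subbundle $V$ (stable with strict inequality); two semi-stable bundles are S-equivalent if the graded bundles associated with their Jordan–Hölder filtrations are isomorphic. $(K)^2$ is the symmetric square. A two-valued group structure on a set $Y$ is a map $\ast\colon Y\times Y\to(Y)^2$ that is associative (the multisets $[x\ast(y\ast z)_1,x\ast(y\ast z)_2]$ and $[(x\ast y)_1\ast z,(x\ast y)_2\ast z]$ coincide), with a unit $e$ satisfying $e\ast x=x\ast e=[x,x]$ and a map $\mathrm{inv}$ with $e\in\mathrm{inv}(x)\ast x$, $e\in x\ast\mathrm{inv}(x)$. *)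

(* Defs.v *)
From HB Require Import structures.
From mathcomp Require Import all_boot all_algebra.
From Stdlib Require Import List Permutation ClassicalEpsilon.
Set Implicit Arguments. Unset Strict Implicit. Unset Printing Implicit Defensive.
Import GRing.Theory.
Local Open Scope ring_scope.

(* Two-valued multiplications: Y x Y -> (Y)^2.  An element of the symmetric
   square (Y)^2 is represented by an ordered pair; two pairs represent the
   same element of (Y)^2 iff they are permutations of each other. *)
Definition mset2 (Y : Type) (p : Y * Y) : list Y := p.1 :: p.2 :: nil.

Definition two_valued_group (Y : Type) (m : Y -> Y -> Y * Y) : Prop :=
  (forall x y z : Y,
     Permutation (mset2 (m x (m y z).1) ++ mset2 (m x (m y z).2))
                 (mset2 (m (m x y).1 z) ++ mset2 (m (m x y).2 z))) /\
  exists (e : Y) (inv : Y -> Y),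
    (forall x, Permutation (mset2 (m e x)) (x :: x :: nil) /\
               Permutation (mset2 (m x e)) (x :: x :: nil)) /\
    (forall x, In e (mset2 (m (inv x) x)) /\ In e (mset2 (m x (inv x)))).

(* The group of degree-0 line bundles is modelled by an abelian group A
   (written additively: tensor = +, dual = -).  The class of j (+) j^{-1}
   in the Kummer set K = A/{+-1} is the orbit {j, -j}. *)
Definition pm (A : zmodType) (j : A) : A -> Prop := fun x => x = j \/ x = - j.

Definition Kum (A : zmodType) : Type := {s : A -> Prop | exists j : A, s = pm j}.

Definition cls (A : zmodType) (j : A) : Kum A :=
  exist (fun s => exists j0 : A, s = pm j0) (pm j) (ex_intro _ j erefl).

Definition rep (A : zmodType) (a : Kum A) : A :=
  proj1_sig (constructive_indefinite_description _ (proj2_sig a)).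

Definition star_s (A : zmodType) (a b : Kum A) : Kum A * Kum A :=
  (cls (rep a + rep b), cls (rep a - rep b)).

(* Main.v *)
Require Import Defs.
From mathcomp Require Import all_boot all_algebra.
From Stdlib Require Import List Permutation.
From Stdlib Require Import FunctionalExtensionality PropExtensionality ProofIrrelevance ClassicalEpsilon.
Local Open Scope ring_scope.
Set Implicit Arguments. Unset Strict Implicit.
Import GRing.Theory.

Lemma cls_eq (A : zmodType) (j k : A) : pm j = pm k -> cls j = cls k.
Proof.
move=> H; unfold cls.
apply: eq_sig_hprop; [move=> ? ? ?; apply: proof_irrelevance| exact H].
Qed.

Lemma clsN (A : zmodType) (j : A) : cls (- j) = cls j.
Proof.
apply: cls_eq; apply: functional_extensionality => x;
apply: propositional_extensionality; rewrite /pm opprK; tauto.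
Qed.

Lemma rep_cls (A : zmodType) (j : A) : rep (cls j) = j \/ rep (cls j) = - j.
Proof.
rewrite /rep; case: constructive_indefinite_description => k /= Hk.
have : pm k k by left.
rewrite -Hk /pm => [[->|->]]; [left|right]; rewrite ?opprK //.
Qed.

Lemma cls_rep (A : zmodType) (a : Kum A) : cls (rep a) = a.
Proof.
rewrite /rep; case: constructive_indefinite_description => k /= Hk.
case: a Hk => s Hs /= Hk; unfold cls.
apply: eq_sig_hprop; [move=> ? ? ?; apply: proof_irrelevance| simpl; by rewrite Hk].
Qed.

Lemma starW (A : zmodType) (j l : A) :
  star_s (cls j) (cls l) = (cls (j + l), cls (j - l)) \/
  star_s (cls j) (cls l) = (cls (j - l), cls (j + l)).
Proof.
rewrite /star_s; case: (rep_cls j) => ->; case: (rep_cls l) => ->.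
- by left.
- by right; rewrite opprK.
- right; congr pair.
    + by rewrite -[cls (j - l)]clsN opprB addrC.
    + by rewrite -[cls (j + l)]clsN opprD.
- left; congr pair.
    + by rewrite -[cls (j + l)]clsN opprD.
    + by rewrite -[cls (j - l)]clsN opprB opprK addrC.
Qed.

Lemma starP (A : zmodType) (j l : A) :
  Permutation (mset2 (star_s (cls j) (cls l))) (mset2 (cls (j + l), cls (j - l))).
Proof.
case: (starW j l) => ->; [apply: Permutation_refl| apply: perm_swap].
Qed.

Theorem mainTheorem5 (A : zmodType) :
  (* star_s is well defined: independent of the chosen representatives *)
  (forall j l : A,
     Permutation (mset2 (star_s (cls j) (cls l)))
                 (mset2 (cls (j + l), cls (j - l)))) /\
  two_valued_group (@star_s A).
Proof.
split; first exact: starP.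
split.
- move=> x y z.
  rewrite -(cls_rep x) -(cls_rep y) -(cls_rep z).
  set a := rep x; set b := rep y; set c := rep z.
  have E : forall p : Kum A * Kum A,
      p = (cls (b + c), cls (b - c)) \/ p = (cls (b - c), cls (b + c)) ->
      Permutation (mset2 (star_s (cls a) p.1) ++ mset2 (star_s (cls a) p.2))
        (mset2 (star_s (cls a) (cls (b + c))) ++ mset2 (star_s (cls a) (cls (b - c)))).
    move=> p [->|->]; first by apply: Permutation_refl.
    exact: (Permutation_app_comm (mset2 _) (mset2 _)).
  have F : forall p : Kum A * Kum A,
      p = (cls (a + b), cls (a - b)) \/ p = (cls (a - b), cls (a + b)) ->
      Permutation (mset2 (star_s p.1 (cls c)) ++ mset2 (star_s p.2 (cls c)))
        (mset2 (star_s (cls (a + b)) (cls c)) ++ mset2 (star_s (cls (a - b)) (cls c))).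
    move=> p [->|->]; first by apply: Permutation_refl.
    exact: (Permutation_app_comm (mset2 _) (mset2 _)).
  have L1 := Permutation_app (starP a (b + c)) (starP a (b - c)).
  have L2 := Permutation_app (starP (a + b) c) (starP (a - b) c).
  apply: Permutation_trans (E _ (starW b c)) _.
  apply: Permutation_trans L1 _.
  apply: Permutation_sym.
  apply: Permutation_trans (F _ (starW a b)) _.
  apply: Permutation_trans L2 _.
  rewrite /mset2 /=.
  have e1 : a + (b + c) = a + b + c by rewrite addrA.
  have e2 : a - (b + c) = a - b - c by rewrite opprD addrA.
  have e3 : a + (b - c) = a + b - c by rewrite addrA.
  have e4 : a - (b - c) = a - b + c by rewrite opprB addrA addrAC.
  rewrite e1 e2 e3 e4.
  apply: perm_skip.
  exact: (Permutation_sym (Permutation_app_comm [:: cls (a - b - c)] [:: cls (a + b - c); cls (a - b + c)])).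
- exists (cls 0), id; split => x.
  + rewrite -(cls_rep x); case: (starW 0 (rep x)) => ->;
    case: (starW (rep x) 0) => -> /=; rewrite ?add0r ?sub0r ?addr0 ?subr0 ?clsN;
    split; apply: Permutation_refl.
  + rewrite /id -(cls_rep x); case: (starW (rep x) (rep x)) => -> /=;
    rewrite subrr; tauto.
Qed.
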